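(* Assume $\delta>d$, $\alpha=\gamma/(\delta-d)$, and that $f$ is not a polynomial product. Let $V\subset\mathbb{C}$ be a set whose closure is contained in $A_p$. Then the functions $$G_n(z,w)=\frac{1}{d^n}\log^+\frac{|w_n|}{|z_n|^\alpha},\qquad (z_n,w_n)=f^n(z,w),$$ converge uniformly on $V\times\mathbb{C}$ to $G_z^\alpha(w)=\lim_{n\to\infty}d^{-n}\log^+\big(|Q_z^n(w)|/|p^n(z)|^\alpha\big)$.
   Context: Let $p(z)=z^\delta+O(z^{\delta-1})$ be a monic polynomial of degree $\delta\ge 2$, and let $q(z,w)=b(z)w^d+(\text{terms of lower degree in } w)$ be a polynomial with $d=\deg_w q\ge 2$, where $b$ is a monic polynomial of degree $\gamma\ge 0$. Let $f(z,w)=(p(z),q(z,w))$; $f$ is a polynomial product if $q$ does not depend on $z$. Write $Q_z^n=q_{p^{n-1}(z)}\circ\cdots\circ q_{p(z)}\circ q_z$ with $q_z=q(z,\cdot)$, so $f^n(z,w)=(p^n(z),Q_z^n(w))$. Let $A_p=\{z: p^n(z)\to\infty\}$. For $\delta>d$, $\alpha=\max\{n_j/(\delta-m_j)\}$ over monomials $z^{n_j}w^{m_j}$ appearing in $q$ with nonzero coefficient. *)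

(* Defs.v *)
From Stdlib Require Import Reals Lra.
Open Scope R_scope.

Definition Cx : Type := (R * R)%type.
Definition Czero : Cx := (0, 0).
Definition Cone : Cx := (1, 0).
Definition Cadd (x y : Cx) : Cx := (fst x + fst y, snd x + snd y).
Definition Csub (x y : Cx) : Cx := (fst x - fst y, snd x - snd y).
Definition Cmul (x y : Cx) : Cx :=
  (fst x * fst y - snd x * snd y, fst x * snd y + snd x * fst y).
Fixpoint Cpow (x : Cx) (n : nat) : Cx :=
  match n with O => Cone | S k => Cmul (Cpow x k) x end.
Definition Cnorm (x : Cx) : R := sqrt (fst x * fst x + snd x * snd x).

Fixpoint Csum (f : nat -> Cx) (n : nat) : Cx :=
  match n with O => Czero | S k => Cadd (Csum f k) (f k) end.

Definition peval (delta : nat) (a : nat -> Cx) (z : Cx) : Cx :=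
  Csum (fun i => Cmul (a i) (Cpow z i)) (S delta).

Definition qeval (N d : nat) (c : nat -> nat -> Cx) (z w : Cx) : Cx :=
  Csum (fun j => Cmul (Csum (fun i => Cmul (c i j) (Cpow z i)) (S N)) (Cpow w j)) (S d).

Definition fmap (delta N d : nat) (a : nat -> Cx) (c : nat -> nat -> Cx) (zw : Cx * Cx) : Cx * Cx :=
  (peval delta a (fst zw), qeval N d c (fst zw) (snd zw)).
Definition fiter (delta N d : nat) (a : nat -> Cx) (c : nat -> nat -> Cx) (n : nat) (zw : Cx * Cx) : Cx * Cx :=
  Nat.iter n (fmap delta N d a c) zw.

Definition poly_product (N d : nat) (c : nat -> nat -> Cx) : Prop :=
  forall z1 z2 w, qeval N d c z1 w = qeval N d c z2 w.

Definition A_p (delta : nat) (a : nat -> Cx) (z : Cx) : Prop :=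
  cv_infty (fun n => Cnorm (Nat.iter n (peval delta a) z)).

Definition in_closure (V : Cx -> Prop) (z : Cx) : Prop :=
  forall eps, eps > 0 -> exists v, V v /\ Cnorm (Csub z v) < eps.

Definition Cnz (x : Cx) : bool :=
  if Req_EM_T (fst x) 0 then (if Req_EM_T (snd x) 0 then false else true) else true.

Fixpoint Rmax_upto (f : nat -> R) (n : nat) : R :=
  match n with O => f O | S k => Rmax (Rmax_upto f k) (f (S k)) end.

(* alpha = max { n_j / (delta - m_j) } over monomials z^{n_j} w^{m_j} of q with
   nonzero coefficient (all values are >= 0 and at least one monomial is present,
   so the default 0 for absent monomials does not change the max). *)
Definition alpha (delta N d : nat) (c : nat -> nat -> Cx) : R :=
  Rmax_upto (fun j => Rmax_upto (fun i =>
     if Cnz (c i j) then INR i / INR (delta - j) else 0) N) d.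

Definition logplus (x : R) : R := Rmax 0 (ln x).

Definition Gn (delta N d : nat) (a : nat -> Cx) (c : nat -> nat -> Cx) (al : R)
  (n : nat) (z w : Cx) : R :=
  let zw := fiter delta N d a c n (z, w) in
  / (INR d ^ n) * logplus (Cnorm (snd zw) / Rpower (Cnorm (fst zw)) al).

(* Main.v *)
Require Import Defs.
From Stdlib Require Import Reals Lra Lia ZArith ClassicalEpsilon Classical.
From Coquelicot Require Complex Compactness.
Open Scope R_scope.

Lemma Cnorm_Cmod x : Cnorm x = Complex.Cmod x.
Proof. unfold Cnorm, Complex.Cmod. f_equal. simpl. ring. Qed.

Lemma Cnorm_ge0 x : 0 <= Cnorm x.
Proof. unfold Cnorm. apply sqrt_pos. Qed.

Lemma Cnorm_mul x y : Cnorm (Cmul x y) = Cnorm x * Cnorm y.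
Proof. rewrite !Cnorm_Cmod. exact (Complex.Cmod_mult x y). Qed.

Lemma Cnorm_add x y : Cnorm (Cadd x y) <= Cnorm x + Cnorm y.
Proof. rewrite !Cnorm_Cmod. exact (Complex.Cmod_triangle x y). Qed.

Lemma Cnorm_pow x n : Cnorm (Cpow x n) = Cnorm x ^ n.
Proof.
  induction n; simpl.
  - unfold Cnorm, Cone; simpl. replace (1*1+0*0) with 1 by ring. apply sqrt_1.
  - rewrite Cnorm_mul, IHn. ring.
Qed.

Lemma Cnorm_zero : Cnorm Czero = 0.
Proof. unfold Cnorm, Czero; simpl. replace (0*0+0*0) with 0 by ring. apply sqrt_0. Qed.

Lemma Cnorm_one : Cnorm Cone = 1.
Proof. unfold Cnorm, Cone; simpl. replace (1*1+0*0) with 1 by ring. apply sqrt_1. Qed.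

Lemma Cadd_sub x y : Cadd (Csub x y) y = x.
Proof. destruct x, y; unfold Cadd, Csub; simpl; f_equal; ring. Qed.

Lemma Cnorm_sub_ge x y : Cnorm x - Cnorm y <= Cnorm (Csub x y).
Proof. pose proof (Cnorm_add (Csub x y) y). rewrite Cadd_sub in H. lra. Qed.

Lemma Cnorm_sub_sym x y : Cnorm (Csub x y) = Cnorm (Csub y x).
Proof. destruct x, y; unfold Cnorm, Csub; simpl. f_equal. ring. Qed.

Lemma Cnorm_add_ge x y : Cnorm x - Cnorm y <= Cnorm (Cadd x y).
Proof.
  pose proof (Cnorm_add (Cadd x y) (Csub Czero y)).
  assert (Cadd (Cadd x y) (Csub Czero y) = x) by
    (destruct x, y; unfold Cadd, Csub, Czero; simpl; f_equal; ring).
  rewrite H0 in H.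
  assert (Cnorm (Csub Czero y) = Cnorm y) by
    (destruct y; unfold Cnorm, Csub, Czero; simpl; f_equal; ring).
  lra.
Qed.

Fixpoint Rsum (f : nat -> R) (n : nat) : R :=
  match n with O => 0 | S k => Rsum f k + f k end.

Lemma Rsum_le f g n : (forall i, (i < n)%nat -> f i <= g i) -> Rsum f n <= Rsum g n.
Proof. induction n; simpl; intros; [lra|]. assert (f n <= g n) by (apply H; lia). assert (Rsum f n <= Rsum g n) by (apply IHn; intros; apply H; lia). lra. Qed.

Lemma Rsum_ge0 f n : (forall i, (i < n)%nat -> 0 <= f i) -> 0 <= Rsum f n.
Proof. intros. apply Rle_trans with (Rsum (fun _ => 0) n). clear. induction n; simpl; lra. now apply Rsum_le. Qed.

Lemma Rsum_scal k f n : Rsum (fun i => k * f i) n = k * Rsum f n.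
Proof. induction n; simpl; [ring|]. rewrite IHn; ring. Qed.

Lemma Csum_norm f n : Cnorm (Csum f n) <= Rsum (fun i => Cnorm (f i)) n.
Proof. induction n; simpl. rewrite Cnorm_zero; lra. pose proof (Cnorm_add (Csum f n) (f n)). lra. Qed.

Lemma Csum_norm_ge f n k : (k < n)%nat ->
  Cnorm (f k) - Rsum (fun i => if Nat.eqb i k then 0 else Cnorm (f i)) n <= Cnorm (Csum f n).
Proof.
  induction n; intros Hk; [lia|]. simpl.
  destruct (Nat.eq_dec k n) as [->|Hne].
  - rewrite Nat.eqb_refl.
    pose proof (Csum_norm f n).
    assert (Rsum (fun i => if Nat.eqb i n then 0 else Cnorm (f i)) n = Rsum (fun i => Cnorm (f i)) n).
    { clear. assert (forall m, (m <= n)%nat -> Rsum (fun i => if Nat.eqb i n then 0 else Cnorm (f i)) m = Rsum (fun i => Cnorm (f i)) m).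
      induction m; simpl; intros; auto. rewrite IHm by lia. replace (Nat.eqb m n) with false. auto. symmetry; apply Nat.eqb_neq; lia. apply H; lia. }
    rewrite H0. pose proof (Cnorm_add_ge (f n) (Csum f n)).
    assert (Cadd (Csum f n) (f n) = Cadd (f n) (Csum f n)) by (unfold Cadd; f_equal; ring). rewrite H2. lra.
  - replace (Nat.eqb n k) with false by (symmetry; apply Nat.eqb_neq; lia).
    specialize (IHn ltac:(lia)). pose proof (Cnorm_add_ge (Csum f n) (f n)). lra.
Qed.


Lemma pow_mono_exp r m n : 1 <= r -> (m <= n)%nat -> r ^ m <= r ^ n.
Proof. intros. apply Rle_pow; auto. Qed.

Lemma pow_mono_base x y n : 0 <= x <= y -> x ^ n <= y ^ n.
Proof. intros. apply pow_incr; auto. Qed.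

Lemma p_bounds delta a : a delta = Cone -> (1 <= delta)%nat ->
  exists R0, 1 <= R0 /\ forall z, R0 <= Cnorm z ->
    Cnorm z ^ delta / 2 <= Cnorm (peval delta a z) <= 2 * Cnorm z ^ delta.
Proof.
  intros Ha Hd.
  set (A := Rsum (fun i => Cnorm (a i)) delta).
  assert (HA : 0 <= A) by (apply Rsum_ge0; intros; apply Cnorm_ge0).
  exists (Rmax 1 (2*A+1)). split; [apply Rmax_l|]. intros z Hz.
  set (r := Cnorm z) in *.
  assert (Hr1 : 1 <= r) by (eapply Rle_trans; [apply Rmax_l|exact Hz]).
  assert (HrA : 2*A+1 <= r) by (eapply Rle_trans; [apply Rmax_r|exact Hz]).
  unfold peval. simpl Csum. rewrite Ha.
  assert (Ht : Cnorm (Csum (fun i => Cmul (a i) (Cpow z i)) delta) <= A * r ^ (delta - 1)).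
  { eapply Rle_trans. apply Csum_norm. unfold A. rewrite Rmult_comm, <- Rsum_scal.
    apply Rsum_le. intros i Hi.
    rewrite Cnorm_mul, Cnorm_pow. fold r. rewrite (Rmult_comm _ (Cnorm (a i))). apply Rmult_le_compat_l. apply Cnorm_ge0.
    apply pow_mono_exp; auto; lia. }
  assert (Hp : r ^ delta = r * r ^ (delta - 1)).
  { replace delta with (S (delta - 1)) at 1 by lia. reflexivity. }
  assert (H0 : 0 <= r ^ (delta - 1)) by (apply pow_le; lra).
  assert (A * r ^ (delta - 1) <= r ^ delta / 2) by (rewrite Hp; nra).
  idtac.
  pose proof (Cnorm_add (Csum (fun i => Cmul (a i) (Cpow z i)) delta) (Cmul Cone (Cpow z delta))).
  pose proof (Cnorm_add_ge (Cmul Cone (Cpow z delta)) (Csum (fun i => Cmul (a i) (Cpow z i)) delta)).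
  rewrite Cnorm_mul, Cnorm_one, Cnorm_pow in H1, H2. fold r in H1, H2.
  assert (Cadd (Cmul Cone (Cpow z delta)) (Csum (fun i => Cmul (a i) (Cpow z i)) delta)
    = Cadd (Csum (fun i => Cmul (a i) (Cpow z i)) delta) (Cmul Cone (Cpow z delta))) by (unfold Cadd; f_equal; ring).
  rewrite H3 in H2.
  assert (0 <= r ^ delta) by (apply pow_le; lra).
  split; lra.
Qed.


Lemma Rmax_upto_ge f n k : (k <= n)%nat -> f k <= Rmax_upto f n.
Proof.
  induction n; intros Hk; simpl.
  - replace k with 0%nat by lia. lra.
  - destruct (Nat.eq_dec k (S n)) as [->|]. apply Rmax_r.
    apply Rle_trans with (Rmax_upto f n); [apply IHn; lia | apply Rmax_l].
Qed.

Lemma Rmax_upto_ge0 f n : (forall k, 0 <= f k) -> 0 <= Rmax_upto f n.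
Proof. intros. eapply Rle_trans; [apply H|apply (Rmax_upto_ge f n 0); lia]. Qed.

Lemma Cnz_false x : Cnz x = false -> Cnorm x = 0.
Proof.
  unfold Cnz. destruct x as [x y]; simpl.
  destruct (Req_EM_T x 0); destruct (Req_EM_T y 0); try discriminate.
  intros _. subst. apply Cnorm_zero.
Qed.

Lemma alpha_ge0 delta N d c : 0 <= alpha delta N d c.
Proof.
  unfold alpha. apply Rmax_upto_ge0. intros j. apply Rmax_upto_ge0. intros i.
  destruct (Cnz (c i j)). apply Rmult_le_pos. apply pos_INR.
  destruct (delta - j)%nat eqn:E. simpl. rewrite Rinv_0. lra.
  left. apply Rinv_0_lt_compat. apply lt_0_INR. lia. lra.
Qed.

Lemma alpha_bound delta N d c i j : (d < delta)%nat -> (i <= N)%nat -> (j <= d)%nat ->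
  Cnz (c i j) = true -> INR i <= alpha delta N d c * INR (delta - j).
Proof.
  intros Hd Hi Hj Hnz.
  assert (H : INR i / INR (delta - j) <= alpha delta N d c).
  { unfold alpha. eapply Rle_trans; [|apply (Rmax_upto_ge _ d j Hj)]. simpl.
    eapply Rle_trans; [|apply (Rmax_upto_ge _ N i Hi)]. simpl. rewrite Hnz. lra. }
  assert (0 < INR (delta - j)) by (apply lt_0_INR; lia).
  apply Rmult_le_compat_r with (r := INR (delta - j)) in H; [|lra].
  unfold Rdiv in H. rewrite Rmult_assoc, Rinv_l, Rmult_1_r in H; lra.
Qed.

Lemma rpow_bound r al i k : 1 <= r -> INR i <= al * INR k -> r ^ i <= Rpower r al ^ k.
Proof.
  intros Hr H. rewrite <- Rpower_pow by lra. rewrite <- Rpower_pow by (apply exp_pos).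
  rewrite Rpower_mult. apply Rle_Rpower; auto.
Qed.

Lemma rpow_eq r al i k : 1 <= r -> INR i = al * INR k -> r ^ i = Rpower r al ^ k.
Proof.
  intros Hr H. rewrite <- Rpower_pow by lra. rewrite <- Rpower_pow by (apply exp_pos).
  rewrite Rpower_mult. now rewrite H.
Qed.

Definition Bq (N : nat) (c : nat -> nat -> Cx) (z : Cx) (j : nat) : Cx :=
  Csum (fun i => Cmul (c i j) (Cpow z i)) (S N).

Lemma qeval_Bq N d c z w : qeval N d c z w = Csum (fun j => Cmul (Bq N c z j) (Cpow w j)) (S d).
Proof. reflexivity. Qed.

Lemma Bq_bound delta N d c z j : (d < delta)%nat -> (j <= d)%nat -> 1 <= Cnorm z ->
  Cnorm (Bq N c z j) <= Rsum (fun i => Cnorm (c i j)) (S N) * Rpower (Cnorm z) (alpha delta N d c) ^ (delta - j).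
Proof.
  intros Hd Hj Hr. unfold Bq. eapply Rle_trans; [apply Csum_norm|].
  rewrite Rmult_comm, <- Rsum_scal. apply Rsum_le. intros i Hi.
  rewrite Cnorm_mul, Cnorm_pow, (Rmult_comm (Rpower _ _ ^ _)).
  destruct (Cnz (c i j)) eqn:E.
  - apply Rmult_le_compat_l; [apply Cnorm_ge0|].
    apply rpow_bound; auto. apply alpha_bound; auto; lia.
  - rewrite (Cnz_false _ E). lra.
Qed.


Lemma pow_split x m n : x ^ (m + n) = x ^ m * x ^ n.
Proof. apply pow_add. Qed.

Lemma mix_bound rho s delta d j : 0 < rho -> 0 <= s -> (j <= d)%nat -> (j <= delta)%nat ->
  rho ^ (delta - j) * s ^ j <= Rmax 1 (s / rho) ^ d * rho ^ delta.
Proof.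
  intros Hr Hs Hj Hjd. set (m := Rmax 1 (s / rho)).
  assert (Hm1 : 1 <= m) by apply Rmax_l.
  assert (Hsm : s <= m * rho).
  { assert (s / rho <= m) by apply Rmax_r. apply Rmult_le_compat_r with (r := rho) in H; [|lra].
    unfold Rdiv in H. rewrite Rmult_assoc, Rinv_l, Rmult_1_r in H; lra. }
  assert (s ^ j <= m ^ j * rho ^ j).
  { rewrite <- Rpow_mult_distr. apply pow_mono_base. lra. }
  assert (m ^ j <= m ^ d) by (apply pow_mono_exp; auto).
  assert (rho ^ delta = rho ^ (delta - j) * rho ^ j).
  { rewrite <- pow_add. f_equal. lia. }
  assert (0 <= rho ^ (delta - j)) by (apply pow_le; lra).
  assert (0 <= rho ^ j) by (apply pow_le; lra).
  rewrite H1.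
  apply Rle_trans with (rho ^ (delta - j) * (m ^ j * rho ^ j)).
  apply Rmult_le_compat_l; auto.
  replace (rho ^ (delta - j) * (m ^ j * rho ^ j)) with (m ^ j * (rho ^ (delta - j) * rho ^ j)) by ring.
  apply Rmult_le_compat_r; auto. apply Rmult_le_pos; auto.
Qed.

Definition Mtot N d c := Rsum (fun j => Rsum (fun i => Cnorm (c i j)) (S N)) (S d).

Lemma q_upper delta N d c z w : (d < delta)%nat -> 1 <= Cnorm z ->
  Cnorm (qeval N d c z w) <=
  Mtot N d c * (Rmax 1 (Cnorm w / Rpower (Cnorm z) (alpha delta N d c)) ^ d
     * Rpower (Cnorm z) (alpha delta N d c) ^ delta).
Proof.
  intros Hd Hr. rewrite qeval_Bq. eapply Rle_trans; [apply Csum_norm|].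
  unfold Mtot. rewrite Rmult_comm, <- Rsum_scal. apply Rsum_le. intros j Hj.
  rewrite Cnorm_mul, Cnorm_pow.
  pose proof (Bq_bound delta N d c z j Hd ltac:(lia) Hr).
  set (rho := Rpower (Cnorm z) (alpha delta N d c)) in *.
  assert (Hrho : 0 < rho) by apply exp_pos.
  pose proof (mix_bound rho (Cnorm w) delta d j Hrho (Cnorm_ge0 w) ltac:(lia) ltac:(lia)).
  set (Mj := Rsum (fun i => Cnorm (c i j)) (S N)) in *.
  assert (0 <= Mj) by (apply Rsum_ge0; intros; apply Cnorm_ge0).
  assert (0 <= Cnorm w ^ j) by (apply pow_le; apply Cnorm_ge0).
  assert (0 <= rho ^ (delta - j)) by (apply pow_le; lra).
  apply Rle_trans with (Mj * rho ^ (delta - j) * Cnorm w ^ j).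
  apply Rmult_le_compat_r; auto.
  rewrite Rmult_assoc. rewrite (Rmult_comm _ Mj). apply Rmult_le_compat_l; auto.
Qed.


Lemma Bd_lower delta N d gamma c z : (d < delta)%nat -> (gamma <= N)%nat ->
  c gamma d = Cone -> (forall i, (gamma < i)%nat -> c i d = Czero) ->
  alpha delta N d c = INR gamma / INR (delta - d) ->
  2 * Rsum (fun i => Cnorm (c i d)) (S N) + 1 <= Cnorm z ->
  Rpower (Cnorm z) (alpha delta N d c) ^ (delta - d) / 2 <= Cnorm (Bq N c z d).
Proof.
  intros Hd HgN Hg Hz Hal Hr.
  set (C1 := Rsum (fun i => Cnorm (c i d)) (S N)) in *.
  assert (HC1 : 0 <= C1) by (apply Rsum_ge0; intros; apply Cnorm_ge0).
  set (r := Cnorm z) in *.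
  assert (Hr1 : 1 <= r) by lra.
  assert (Hg' : r ^ gamma = Rpower r (alpha delta N d c) ^ (delta - d)).
  { apply rpow_eq; auto. rewrite Hal. field. apply not_0_INR. lia. }
  rewrite <- Hg'.
  pose proof (Csum_norm_ge (fun i => Cmul (c i d) (Cpow z i)) (S N) gamma ltac:(lia)).
  cbv beta in H. rewrite Hg, Cnorm_mul, Cnorm_one, Cnorm_pow in H. fold r in H.
  assert (Hs : Rsum (fun i => if Nat.eqb i gamma then 0 else Cnorm (Cmul (c i d) (Cpow z i))) (S N)
     <= Rsum (fun i => (r ^ gamma / r) * Cnorm (c i d)) (S N)).
  { apply Rsum_le. intros i Hi. rewrite Cnorm_mul, Cnorm_pow. fold r.
    assert (0 < r ^ gamma / r) by (apply Rdiv_lt_0_compat; [apply pow_lt|]; lra).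
    destruct (Nat.eqb_spec i gamma).
    - pose proof (Cnorm_ge0 (c i d)). nra.
    - destruct (Nat.lt_ge_cases gamma i).
      + rewrite (Hz i H1), Cnorm_zero. lra.
      + assert (r ^ i * r <= r ^ gamma).
        { replace (r ^ i * r) with (r ^ S i) by (simpl; ring). apply pow_mono_exp; auto; lia. }
        assert (r ^ i <= r ^ gamma / r).
        { apply Rmult_le_reg_r with r; [lra|]. unfold Rdiv. rewrite Rmult_assoc, Rinv_l; lra. }
        rewrite Rmult_comm. apply Rmult_le_compat_r; auto. apply Cnorm_ge0. }
  rewrite Rsum_scal in Hs. fold C1 in Hs.
  assert (r ^ gamma / r * C1 <= r ^ gamma / 2).
  { assert (0 < r ^ gamma) by (apply pow_lt; lra).
    unfold Rdiv. apply Rmult_le_reg_r with (2 * r); [lra|].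
    replace (r ^ gamma * / r * C1 * (2 * r)) with (r ^ gamma * (2 * C1)) by (field; lra).
    replace (r ^ gamma * / 2 * (2 * r)) with (r ^ gamma * r) by field.
    apply Rmult_le_compat_l; lra. }
  unfold Bq. lra.
Qed.


Lemma mix_bound2 rho s delta d j : 0 < rho -> rho <= s -> (j < d)%nat -> (d < delta)%nat ->
  rho ^ (delta - j) * s ^ j <= rho ^ (delta - d) * s ^ (d - 1) * rho.
Proof.
  intros Hr Hs Hj Hd.
  assert (E1 : rho ^ (delta - j) = rho ^ (delta - d) * rho ^ (d - 1 - j) * rho).
  { rewrite <- pow_add. replace (rho ^ (delta - d + (d - 1 - j)) * rho) with (rho ^ S (delta - d + (d - 1 - j))) by (simpl; ring). f_equal. lia. }
  assert (E2 : s ^ (d - 1) = s ^ (d - 1 - j) * s ^ j).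
  { rewrite <- pow_add. f_equal. lia. }
  rewrite E1, E2.
  assert (rho ^ (d - 1 - j) <= s ^ (d - 1 - j)) by (apply pow_mono_base; lra).
  assert (0 <= rho ^ (delta - d)) by (apply pow_le; lra).
  assert (0 <= s ^ j) by (apply pow_le; lra).
  assert (0 <= rho ^ (d - 1 - j)) by (apply pow_le; lra).
  replace (rho ^ (delta - d) * rho ^ (d - 1 - j) * rho * s ^ j) with
    ((rho ^ (delta - d) * rho * s ^ j) * rho ^ (d - 1 - j)) by ring.
  replace (rho ^ (delta - d) * (s ^ (d - 1 - j) * s ^ j) * rho) with
    ((rho ^ (delta - d) * rho * s ^ j) * s ^ (d - 1 - j)) by ring.
  apply Rmult_le_compat_l; auto. apply Rmult_le_pos; auto. apply Rmult_le_pos; lra.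
Qed.

Lemma q_lower delta N d gamma c z w : (1 <= d)%nat -> (d < delta)%nat -> (gamma <= N)%nat ->
  c gamma d = Cone -> (forall i, (gamma < i)%nat -> c i d = Czero) ->
  alpha delta N d c = INR gamma / INR (delta - d) ->
  2 * Rsum (fun i => Cnorm (c i d)) (S N) + 1 <= Cnorm z ->
  Rmax 1 (4 * Mtot N d c) * Rpower (Cnorm z) (alpha delta N d c) <= Cnorm w ->
  Rpower (Cnorm z) (alpha delta N d c) ^ (delta - d) * Cnorm w ^ d / 4 <= Cnorm (qeval N d c z w).
Proof.
  intros Hd1 Hd HgN Hg Hz Hal Hr Hw.
  pose proof (Bd_lower delta N d gamma c z Hd HgN Hg Hz Hal Hr) as HB.
  assert (Hr1 : 1 <= Cnorm z).
  { assert (0 <= Rsum (fun i => Cnorm (c i d)) (S N)) by (apply Rsum_ge0; intros; apply Cnorm_ge0). lra. }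
  set (rho := Rpower (Cnorm z) (alpha delta N d c)) in *.
  set (s := Cnorm w) in *.
  assert (Hrho : 0 < rho) by apply exp_pos.
  assert (HMt : 0 <= Mtot N d c).
  { unfold Mtot. apply Rsum_ge0; intros. apply Rsum_ge0; intros; apply Cnorm_ge0. }
  assert (HK1 : 1 <= Rmax 1 (4 * Mtot N d c)) by apply Rmax_l.
  assert (HK2 : 4 * Mtot N d c <= Rmax 1 (4 * Mtot N d c)) by apply Rmax_r.
  assert (Hrs : rho <= s) by nra.
  assert (H4 : 4 * Mtot N d c * rho <= s) by nra.
  set (X := rho ^ (delta - d) * s ^ (d - 1)).
  assert (HX : 0 <= X) by (apply Rmult_le_pos; apply pow_le; lra).
  assert (Esd : s ^ d = s ^ (d - 1) * s).
  { replace (s ^ (d - 1) * s) with (s ^ S (d - 1)) by (simpl; ring). f_equal; lia. }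
  rewrite qeval_Bq.
  pose proof (Csum_norm_ge (fun j => Cmul (Bq N c z j) (Cpow w j)) (S d) d ltac:(lia)) as H.
  cbv beta in H. rewrite Cnorm_mul, Cnorm_pow in H. fold s in H.
  assert (Hs : Rsum (fun j => if Nat.eqb j d then 0 else Cnorm (Cmul (Bq N c z j) (Cpow w j))) (S d)
     <= Rsum (fun j => (X * rho) * Rsum (fun i => Cnorm (c i j)) (S N)) (S d)).
  { apply Rsum_le. intros j Hj.
    assert (0 <= Rsum (fun i => Cnorm (c i j)) (S N)) by (apply Rsum_ge0; intros; apply Cnorm_ge0).
    destruct (Nat.eqb_spec j d).
    - apply Rmult_le_pos; auto. apply Rmult_le_pos; lra.
    - rewrite Cnorm_mul, Cnorm_pow. fold s.
      pose proof (Bq_bound delta N d c z j Hd ltac:(lia) Hr1). fold rho in H1.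
      pose proof (mix_bound2 rho s delta d j Hrho Hrs ltac:(lia) Hd).
      assert (0 <= s ^ j) by (apply pow_le; lra).
      assert (0 <= rho ^ (delta - j)) by (apply pow_le; lra).
      apply Rle_trans with (Rsum (fun i => Cnorm (c i j)) (S N) * rho ^ (delta - j) * s ^ j).
      apply Rmult_le_compat_r; auto.
      rewrite Rmult_assoc, Rmult_comm. apply Rmult_le_compat_r; auto. }
  rewrite Rsum_scal in Hs. fold (Mtot N d c) in Hs.
  assert (Hd' : rho ^ (delta - d) / 2 * s ^ d <= Cnorm (Bq N c z d) * s ^ d).
  { apply Rmult_le_compat_r; auto. apply pow_le; unfold s; apply Cnorm_ge0. }
  assert (rho ^ (delta - d) * s ^ d = X * s) by (unfold X; rewrite Esd; ring).
  assert (rho ^ (delta - d) / 2 * s ^ d = X * s / 2) by lra.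
  assert (X * rho * Mtot N d c <= X * s / 4) by nra.
  lra.
Qed.


Lemma ln_le' x y : 0 < x -> x <= y -> ln x <= ln y.
Proof. intros. destruct H0. left; apply ln_increasing; auto. subst; lra. Qed.

Lemma ln_ge0 x : 1 <= x -> 0 <= ln x.
Proof. intros. rewrite <- ln_1. apply ln_le'; lra. Qed.

Lemma logplus_eq x : logplus x = ln (Rmax 1 x).
Proof.
  unfold logplus. destruct (Rle_dec x 1).
  - rewrite (Rmax_left 1 x) by lra. rewrite ln_1. apply Rmax_left.
    destruct (Rlt_dec 0 x). rewrite <- ln_1. apply ln_le'; lra.
    assert (ln x = 0) by (unfold ln; destruct (Rlt_dec 0 x); [contradiction|reflexivity]). lra.
  - rewrite (Rmax_right 1 x) by lra. apply Rmax_right. apply ln_ge0. lra.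
Qed.

Lemma Rpower_half a : Rpower (/ 2) a = / Rpower 2 a.
Proof. unfold Rpower. rewrite ln_Rinv by lra. rewrite <- exp_Ropp. f_equal. ring. Qed.

Lemma Rpower_pow_swap r a n : 0 < r -> Rpower (r ^ n) a = Rpower (Rpower r a) (INR n).
Proof. intros. rewrite <- Rpower_pow by auto. rewrite !Rpower_mult. f_equal. ring. Qed.

Lemma step_estimate delta N d gamma a c : (2 <= delta)%nat -> a delta = Cone ->
  (1 <= d)%nat -> (d < delta)%nat -> (gamma <= N)%nat ->
  c gamma d = Cone -> (forall i, (gamma < i)%nat -> c i d = Czero) ->
  alpha delta N d c = INR gamma / INR (delta - d) ->
  exists R Cst, 1 <= R /\ forall z w, R <= Cnorm z ->
    R <= Cnorm (peval delta a z) /\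
    Rabs (logplus (Cnorm (qeval N d c z w) / Rpower (Cnorm (peval delta a z)) (alpha delta N d c))
          - INR d * logplus (Cnorm w / Rpower (Cnorm z) (alpha delta N d c))) <= Cst.
Proof.
  intros Hdl Ha Hd1 Hd HgN Hg Hz Hal.
  destruct (p_bounds delta a Ha ltac:(lia)) as [R0 [HR0 Hp]].
  set (C1 := Rsum (fun i => Cnorm (c i d)) (S N)).
  set (al := alpha delta N d c) in *.
  assert (Hal0 : 0 <= al) by apply alpha_ge0.
  set (P := Rpower 2 al).
  assert (HP : 1 <= P).
  { unfold P. rewrite <- (Rpower_O 2) by lra. apply Rle_Rpower; lra || lia. }
  set (K := Rmax 1 (4 * Mtot N d c)).
  assert (HK : 1 <= K) by apply Rmax_l.
  assert (HMt : 0 <= Mtot N d c).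
  { unfold Mtot. apply Rsum_ge0; intros. apply Rsum_ge0; intros; apply Cnorm_ge0. }
  exists (Rmax R0 (Rmax 4 (2 * C1 + 1))).
  exists (ln (Rmax 1 (Mtot N d c * P)) + ln (4 * P) + INR d * ln K).
  split. { eapply Rle_trans; [apply HR0|apply Rmax_l]. }
  intros z w Hzr.
  assert (HzR0 : R0 <= Cnorm z) by (eapply Rle_trans; [apply Rmax_l|exact Hzr]).
  assert (Hz4 : 4 <= Cnorm z) by (eapply Rle_trans; [|exact Hzr]; eapply Rle_trans; [|apply Rmax_r]; apply Rmax_l).
  assert (HzC : 2 * C1 + 1 <= Cnorm z) by (eapply Rle_trans; [|exact Hzr]; eapply Rle_trans; [|apply Rmax_r]; apply Rmax_r).
  specialize (Hp z HzR0).
  set (r := Cnorm z) in *.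
  set (t := Cnorm (peval delta a z)) in *.
  assert (Hrd : r ^ 2 <= r ^ delta) by (apply pow_mono_exp; lra || lia).
  split.
  { simpl in Hrd. nra. }
  set (rho := Rpower r al).
  assert (Hrho : 0 < rho) by apply exp_pos.
  assert (Hrdp : 0 < r ^ delta) by (apply pow_lt; lra).
  assert (Erd : Rpower (r ^ delta) al = rho ^ delta).
  { unfold rho. rewrite <- (Rpower_pow delta (Rpower r al)) by apply exp_pos.
    rewrite Rpower_pow_swap by lra. reflexivity. }
  set (T := Rpower t al).
  assert (HTu : T <= P * rho ^ delta).
  { unfold T. rewrite <- Erd. unfold P. rewrite Rpower_mult_distr by lra.
    apply Rle_Rpower_l; auto. split; lra. }
  assert (HTl : rho ^ delta / P <= T).
  { unfold T. rewrite <- Erd. unfold P, Rdiv. rewrite <- Rpower_half.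
    rewrite Rmult_comm, Rpower_mult_distr by lra.
    apply Rle_Rpower_l; auto. split; lra. }
  assert (HrhoD : 0 < rho ^ delta) by (apply pow_lt; lra).
  assert (HT : 0 < T) by apply exp_pos.
  set (Q := Cnorm (qeval N d c z w)).
  set (s := Cnorm w).
  assert (HQ : 0 <= Q) by apply Cnorm_ge0.
  assert (Hs : 0 <= s) by apply Cnorm_ge0.
  set (u := s / rho).
  assert (Hu : 0 <= u) by (unfold u, Rdiv; apply Rmult_le_pos; [lra|left; apply Rinv_0_lt_compat; lra]).
  assert (Esu : s = u * rho) by (unfold u; field; lra).
  set (m := Rmax 1 u).
  assert (Hm : 1 <= m) by apply Rmax_l.
  assert (Hmd : 1 <= m ^ d) by (apply pow_R1_Rle; auto).
  rewrite !logplus_eq. fold m.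
  set (L := ln (Rmax 1 (Q / T))).
  assert (HL0 : 0 <= L) by (apply ln_ge0; apply Rmax_l).
  assert (Hlnm : ln (m ^ d) = INR d * ln m) by (apply ln_pow; lra).
  assert (Hup : L <= ln (Rmax 1 (Mtot N d c * P)) + INR d * ln m).
  { pose proof (q_upper delta N d c z w Hd (Rle_trans _ _ _ (ltac:(lra) : 1 <= 4) Hz4)) as Hq. fold r s rho al Q in Hq.
    change (Rpower r al) with rho in Hq. change (s / rho) with u in Hq. change (Rmax 1 u) with m in Hq.
    assert (Q / T <= Mtot N d c * P * m ^ d).
    { apply Rle_trans with (Q / (rho ^ delta / P)).
      apply Rmult_le_compat_l; auto. apply Rinv_le_contravar; auto. apply Rdiv_lt_0_compat; lra.
      replace (Q / (rho ^ delta / P)) with (Q * P / rho ^ delta) by (field; lra).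
      apply Rmult_le_reg_r with (rho ^ delta); auto.
      replace (Q * P / rho ^ delta * rho ^ delta) with (Q * P) by (field; lra).
      replace (Mtot N d c * P * m ^ d * rho ^ delta) with (Mtot N d c * (m ^ d * rho ^ delta) * P) by ring.
      apply Rmult_le_compat_r; lra. }
    assert (Rmax 1 (Q / T) <= Rmax 1 (Mtot N d c * P) * m ^ d).
    { apply Rmax_lub.
      - assert (1 <= Rmax 1 (Mtot N d c * P)) by apply Rmax_l. nra.
      - apply Rle_trans with (Mtot N d c * P * m ^ d); auto.
        apply Rmult_le_compat_r; [lra|]. apply Rmax_r. }
    assert (1 <= Rmax 1 (Q / T)) by apply Rmax_l.
    assert (1 <= Rmax 1 (Mtot N d c * P)) by apply Rmax_l.
    unfold L. rewrite <- Hlnm, <- ln_mult by lra.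
    apply ln_le'; lra. }
  assert (Hlow : INR d * ln m <= L + ln (4 * P) + INR d * ln K).
  { assert (HlnP : 0 <= ln (4 * P)) by (apply ln_ge0; lra).
    assert (HlnK : 0 <= ln K) by (apply ln_ge0; lra).
    assert (Hd0 : 0 <= INR d) by apply pos_INR.
    destruct (Rle_dec K u) as [HKu|HKu].
    - assert (Hmu : m = u) by (unfold m; apply Rmax_right; lra).
      assert (Hw : K * rho <= s) by (rewrite Esu; nra).
      pose proof (q_lower delta N d gamma c z w Hd1 Hd HgN Hg Hz Hal ltac:(exact HzC) Hw) as Hq.
      change (Rpower (Cnorm z) (alpha delta N d c)) with rho in Hq. change (Cnorm w) with s in Hq. change (Cnorm (qeval N d c z w)) with Q in Hq.
      assert (Hdd : rho ^ delta = rho ^ (delta - d) * rho ^ d).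
      { rewrite <- pow_add. f_equal. lia. }
      assert (Hrdd : 0 < rho ^ (delta - d)) by (apply pow_lt; lra).
      assert (Hrd' : 0 < rho ^ d) by (apply pow_lt; lra).
      assert (Hud : 0 < u ^ d) by (apply pow_lt; lra).
      assert (u ^ d / (4 * P) <= Q / T).
      { apply Rle_trans with (Q / (P * rho ^ delta)).
        - rewrite Esu, Rpow_mult_distr in Hq.
          apply Rmult_le_reg_r with (4 * P * rho ^ delta). nra.
          replace (u ^ d / (4 * P) * (4 * P * rho ^ delta)) with (u ^ d * rho ^ delta) by (field; lra).
          replace (Q / (P * rho ^ delta) * (4 * P * rho ^ delta)) with (4 * Q) by (field; lra).
          rewrite Hdd. lra.
        - apply Rmult_le_compat_l; auto. apply Rinv_le_contravar; auto. }
      assert (ln (u ^ d / (4 * P)) <= L).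
      { unfold L. apply ln_le'. apply Rdiv_lt_0_compat; lra.
        eapply Rle_trans; [exact H|apply Rmax_r]. }
      unfold Rdiv in H0. rewrite ln_mult, ln_Rinv, ln_pow in H0 by (try apply Rinv_0_lt_compat; lra).
      rewrite Hmu. assert (0 <= INR d * ln K) by (apply Rmult_le_pos; lra). lra.
    - assert (m <= K) by (unfold m; apply Rmax_lub; lra).
      assert (ln m <= ln K) by (apply ln_le'; lra).
      assert (INR d * ln m <= INR d * ln K) by (apply Rmult_le_compat_l; auto).
      lra. }
  assert (0 <= ln (Rmax 1 (Mtot N d c * P))) by (apply ln_ge0; apply Rmax_l).
  assert (0 <= ln (4 * P)) by (apply ln_ge0; lra).
  assert (0 <= INR d * ln K) by (apply Rmult_le_pos; [apply pos_INR|apply ln_ge0; lra]).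
  fold Q T. fold L. apply Rabs_le. split; lra.
Qed.


Definition cont (f : Cx -> Cx) : Prop :=
  forall z eps, 0 < eps -> exists eta, 0 < eta /\
    forall z', Cnorm (Csub z' z) < eta -> Cnorm (Csub (f z') (f z)) < eps.

Lemma cont_const k : cont (fun _ => k).
Proof. intros z e He. exists 1. split; [lra|]. intros. replace (Csub k k) with Czero.
  rewrite Cnorm_zero; lra. destruct k; unfold Csub, Czero; simpl; f_equal; ring. Qed.

Lemma cont_id : cont (fun z => z).
Proof. intros z e He. exists e. split; auto. Qed.

Lemma cont_add f g : cont f -> cont g -> cont (fun z => Cadd (f z) (g z)).
Proof.
  intros Hf Hg z e He.
  destruct (Hf z (e/2) ltac:(lra)) as [e1 [He1 H1]].
  destruct (Hg z (e/2) ltac:(lra)) as [e2 [He2 H2]].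
  exists (Rmin e1 e2). split. apply Rmin_pos; auto.
  intros z' Hz'. specialize (H1 z' ltac:(pose proof (Rmin_l e1 e2); lra)).
  specialize (H2 z' ltac:(pose proof (Rmin_r e1 e2); lra)).
  replace (Csub (Cadd (f z') (g z')) (Cadd (f z) (g z))) with
    (Cadd (Csub (f z') (f z)) (Csub (g z') (g z))).
  pose proof (Cnorm_add (Csub (f z') (f z)) (Csub (g z') (g z))). lra.
  destruct (f z'), (f z), (g z'), (g z); unfold Cadd, Csub; simpl; f_equal; ring.
Qed.

Lemma cont_mul f g : cont f -> cont g -> cont (fun z => Cmul (f z) (g z)).
Proof.
  intros Hf Hg z e He.
  set (A := Cnorm (f z)). set (B := Cnorm (g z)).
  assert (HA : 0 <= A) by apply Cnorm_ge0. assert (HB : 0 <= B) by apply Cnorm_ge0.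
  destruct (Hf z (e / (2 * (B + 1))) ltac:(apply Rdiv_lt_0_compat; lra)) as [e1 [He1 H1]].
  destruct (Hg z (Rmin 1 (e / (2 * (A + 1)))) ltac:(apply Rmin_pos; [lra|apply Rdiv_lt_0_compat; lra])) as [e2 [He2 H2]].
  exists (Rmin e1 e2). split. apply Rmin_pos; auto.
  intros z' Hz'. specialize (H1 z' ltac:(pose proof (Rmin_l e1 e2); lra)).
  specialize (H2 z' ltac:(pose proof (Rmin_r e1 e2); lra)).
  replace (Csub (Cmul (f z') (g z')) (Cmul (f z) (g z))) with
    (Cadd (Cmul (Csub (f z') (f z)) (g z')) (Cmul (f z) (Csub (g z') (g z)))).
  2:{ destruct (f z'), (f z), (g z'), (g z); unfold Cadd, Csub, Cmul; simpl; f_equal; ring. }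
  eapply Rle_lt_trans. apply Cnorm_add. rewrite !Cnorm_mul. fold A.
  pose proof (Rmin_l 1 (e / (2 * (A + 1)))). pose proof (Rmin_r 1 (e / (2 * (A + 1)))).
  assert (Hgz : Cnorm (g z') <= B + 1).
  { pose proof (Cnorm_sub_ge (g z') (g z)) as Hs. fold B in Hs. lra. }
  assert (Hx : Cnorm (Csub (f z') (f z)) * Cnorm (g z') <= e / (2 * (B + 1)) * (B + 1)).
  { apply Rmult_le_compat; try apply Cnorm_ge0; lra. }
  assert (Hy : A * Cnorm (Csub (g z') (g z)) <= A * (e / (2 * (A + 1)))).
  { apply Rmult_le_compat_l; lra. }
  assert (e / (2 * (B + 1)) * (B + 1) = e / 2) by (field; lra).
  assert (A * (e / (2 * (A + 1))) < e / 2).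
  { replace (A * (e / (2 * (A + 1)))) with ((e / 2) * (A / (A + 1))) by (field; lra).
    assert (A / (A + 1) < 1). { apply Rmult_lt_reg_r with (A + 1); [lra|]. unfold Rdiv. rewrite Rmult_assoc, Rinv_l; lra. }
    nra. }
  lra.
Qed.

Lemma cont_comp f g : cont f -> cont g -> cont (fun z => f (g z)).
Proof.
  intros Hf Hg z e He.
  destruct (Hf (g z) e He) as [e1 [He1 H1]].
  destruct (Hg z e1 He1) as [e2 [He2 H2]].
  exists e2. split; auto.
Qed.

Lemma cont_pow n : cont (fun z => Cpow z n).
Proof. induction n; simpl. apply cont_const. apply cont_mul; auto. apply cont_id. Qed.

Lemma cont_Csum (f : nat -> Cx -> Cx) n : (forall i, cont (f i)) -> cont (fun z => Csum (fun i => f i z) n).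
Proof. intros H. induction n; simpl. apply cont_const. apply cont_add; auto. Qed.

Lemma cont_peval delta a : cont (peval delta a).
Proof.
  unfold peval. apply (cont_Csum (fun i z => Cmul (a i) (Cpow z i))).
  intros i. apply cont_mul. apply cont_const. apply cont_pow.
Qed.

Lemma cont_iter delta a m : cont (Nat.iter m (peval delta a)).
Proof.
  induction m; simpl. apply cont_id.
  apply (cont_comp (peval delta a) (Nat.iter m (peval delta a))). apply cont_peval. auto.
Qed.


Lemma nat_above x : exists k : nat, x < INR k.
Proof.
  destruct (archimed x) as [H1 H2].
  destruct (Z_lt_le_dec (up x) 0).
  - exists 0%nat. simpl. apply IZR_lt in l. lra.
  - exists (Z.to_nat (up x)). rewrite INR_IZR_INZ, Z2Nat.id by lia. lra.
Qed.

Lemma fst_le x : Rabs (fst x) <= Cnorm x.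
Proof.
  unfold Cnorm. rewrite <- sqrt_Rsqr_abs. apply sqrt_le_1_alt. unfold Rsqr.
  pose proof (Rle_0_sqr (snd x)). unfold Rsqr in H. lra.
Qed.

Lemma snd_le x : Rabs (snd x) <= Cnorm x.
Proof.
  unfold Cnorm. rewrite <- sqrt_Rsqr_abs. apply sqrt_le_1_alt. unfold Rsqr.
  pose proof (Rle_0_sqr (fst x)). unfold Rsqr in H. lra.
Qed.

Lemma box_norm (x y u v D : R) : 0 < D -> Rabs (x - u) < D -> Rabs (y - v) < D ->
  Cnorm (Csub (x, y) (u, v)) < 2 * D.
Proof.
  intros HD H1 H2. unfold Cnorm, Csub; simpl.
  rewrite <- (sqrt_square (2 * D)) by lra. apply sqrt_lt_1_alt. split.
  pose proof (Rle_0_sqr (x-u)); pose proof (Rle_0_sqr (y-v)); unfold Rsqr in *; lra.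
  apply Rabs_def2 in H1. apply Rabs_def2 in H2. nra.
Qed.

Lemma iter_invariant delta a R : (forall z, R <= Cnorm z -> R <= Cnorm (peval delta a z)) ->
  forall z m, R <= Cnorm (Nat.iter m (peval delta a) z) ->
  forall n, (m <= n)%nat -> R <= Cnorm (Nat.iter n (peval delta a) z).
Proof.
  intros Hinv z m Hm n Hn. induction n.
  - replace m with 0%nat in Hm by lia. auto.
  - destruct (Nat.eq_dec m (S n)). subst; auto. simpl. apply Hinv. apply IHn. lia.
Qed.

Definition GoodD delta a Rr (V : Cx -> Prop) (p : Cx) (D : R) : Prop :=
  0 < D /\ ((forall v, V v -> 2 * D <= Cnorm (Csub p v)) \/
            exists m : nat, INR m * D <= 1 /\
              forall z', Cnorm (Csub z' p) < 2 * D -> Rr <= Cnorm (Nat.iter m (peval delta a) z')).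

Lemma GoodD_exists delta a Rr (V : Cx -> Prop) p :
  (forall z, in_closure V z -> A_p delta a z) -> exists D, GoodD delta a Rr V p D.
Proof.
  intros HV. destruct (classic (in_closure V p)) as [Hc|Hc].
  - specialize (HV p Hc). destruct (HV (Rr + 1)) as [m Hm]. specialize (Hm m (le_n m)).
    destruct (cont_iter delta a m p 1 ltac:(lra)) as [eta [Heta Hct]].
    assert (Hm1 : 0 < INR m + 1) by (pose proof (pos_INR m); lra).
    exists (Rmin (eta / 2) (/ (INR m + 1))). split.
    { apply Rmin_pos. lra. apply Rinv_0_lt_compat; lra. }
    right. exists m. split.
    + eapply Rle_trans. apply Rmult_le_compat_l. apply pos_INR. apply Rmin_r.
      apply Rmult_le_reg_r with (INR m + 1); auto.
      rewrite Rmult_assoc, Rinv_l by lra. pose proof (pos_INR m). lra.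
    + intros z' Hz'. pose proof (Rmin_l (eta / 2) (/ (INR m + 1))).
      specialize (Hct z' ltac:(lra)).
      rewrite Cnorm_sub_sym in Hct.
      pose proof (Cnorm_sub_ge (Nat.iter m (peval delta a) p) (Nat.iter m (peval delta a) z')).
      lra.
  - unfold in_closure in Hc.
    apply not_all_ex_not in Hc. destruct Hc as [e He].
    apply imply_to_and in He. destruct He as [He Hn].
    exists (e / 2). split. lra. left. intros v Hv.
    destruct (Rlt_le_dec (Cnorm (Csub p v)) e). exfalso. apply Hn. exists v; auto. lra.
Qed.

Lemma uniform_escape delta a Rr (V : Cx -> Prop) :
  (forall z, Rr <= Cnorm z -> Rr <= Cnorm (peval delta a z)) ->
  (forall z, in_closure V z -> A_p delta a z) ->
  exists k : nat, forall z, V z -> forall n, (k <= n)%nat -> Rr <= Cnorm (Nat.iter n (peval delta a) z).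
Proof.
  intros Hinv HV.
  assert (Hg : forall x y : R, exists D, GoodD delta a Rr V (x, y) D) by (intros; apply GoodD_exists; auto).
  set (Df := fun x y => proj1_sig (constructive_indefinite_description _ (Hg x y))).
  assert (HDf : forall x y, GoodD delta a Rr V (x, y) (Df x y)).
  { intros. unfold Df. apply (proj2_sig (constructive_indefinite_description _ (Hg x y))). }
  set (Dp := fun x y => mkposreal (Df x y) (proj1 (HDf x y))).
  destruct (Compactness.compactness_value_2d (-Rr) Rr (-Rr) Rr Dp) as [d0 Hd0].
  destruct (nat_above (/ d0)) as [k Hk].
  exists k. intros z Hz n Hn.
  destruct (Rle_dec Rr (Cnorm z)) as [HzR|HzR].
  { apply (iter_invariant delta a Rr Hinv z 0); auto. lia. }
  destruct z as [x y].
  pose proof (fst_le (x, y)). pose proof (snd_le (x, y)). simpl in H, H0.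
  assert (Hx : Rabs x < Rr) by lra. assert (Hy : Rabs y < Rr) by lra.
  apply Rabs_def2 in Hx. apply Rabs_def2 in Hy.
  apply NNPP. intro Hneg.
  apply (Hd0 x y ltac:(split; lra) ltac:(split; lra)).
  intros [u [v [Hu [Hv [Hxu [Hyv HD]]]]]]. apply Hneg. simpl in Hxu, Hyv, HD.
  destruct (HDf u v) as [HDpos [H1 | [m [Hm Hit]]]].
  - exfalso. specialize (H1 (x, y) Hz). rewrite Cnorm_sub_sym in H1.
    pose proof (box_norm x y u v (Df u v) HDpos Hxu Hyv). lra.
  - apply (iter_invariant delta a Rr Hinv (x, y) m).
    + apply Hit. apply box_norm; auto.
    + assert (INR m * d0 <= 1).
      { eapply Rle_trans; [|exact Hm]. apply Rmult_le_compat_l; [apply pos_INR|exact HD]. }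
      assert (Hd0p : 0 < d0) by apply cond_pos.
      assert (INR m <= / d0).
      { apply Rmult_le_reg_r with d0; auto. rewrite Rinv_l; lra. }
      assert (Hmk : INR m < INR k) by lra. apply INR_lt in Hmk. lia.
Qed.


Lemma fiter_fst delta N d a c n z w :
  fst (fiter delta N d a c n (z, w)) = Nat.iter n (peval delta a) z.
Proof. induction n; simpl; auto. unfold fiter in *. simpl. rewrite IHn. reflexivity. Qed.

Lemma geom_small Cst : 0 <= Cst -> forall eps, 0 < eps ->
  exists N : nat, forall n, (N <= n)%nat -> Cst * / 2 ^ n < eps.
Proof.
  intros HC eps He.
  destruct (pow_lt_1_zero (/ 2) ltac:(rewrite Rabs_right; lra) (eps / (Cst + 1)) ltac:(apply Rdiv_lt_0_compat; lra)) as [N HN].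
  exists N. intros n Hn. specialize (HN n Hn). rewrite pow_inv in HN.
  assert (0 < / 2 ^ n) by (apply Rinv_0_lt_compat; apply pow_lt; lra).
  rewrite Rabs_right in HN by lra.
  apply Rle_lt_trans with ((Cst + 1) * / 2 ^ n). nra.
  apply Rmult_lt_reg_l with (/ (Cst + 1)). apply Rinv_0_lt_compat; lra.
  rewrite <- Rmult_assoc, Rinv_l by lra. unfold Rdiv in HN. lra.
Qed.

Lemma tail_bound (g : nat -> R) Cst k : 0 <= Cst ->
  (forall n, (k <= n)%nat -> Rabs (g (S n) - g n) <= Cst * / 2 ^ S n) ->
  forall n j, (k <= n)%nat -> Rabs (g (n + j)%nat - g n) <= Cst * / 2 ^ n - Cst * / 2 ^ (n + j).
Proof.
  intros HC Hs n j Hn. induction j.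
  - rewrite Nat.add_0_r. replace (g n - g n) with 0 by ring. rewrite Rabs_R0. lra.
  - replace (n + S j)%nat with (S (n + j)) by lia.
    specialize (Hs (n + j)%nat ltac:(lia)).
    replace (g (S (n + j)) - g n) with ((g (S (n + j)) - g (n + j)%nat) + (g (n + j)%nat - g n)) by ring.
    eapply Rle_trans. apply Rabs_triang.
    assert (Cst * / 2 ^ S (n + j) + Cst * / 2 ^ S (n + j) = Cst * / 2 ^ (n + j)).
    { simpl. field. apply pow_nonzero. lra. }
    lra.
Qed.


Theorem proposition4p12
  (delta d gamma N : nat) (a : nat -> Cx) (c : nat -> nat -> Cx) (V : Cx -> Prop) :
  (2 <= delta)%nat -> a delta = Cone ->
  (2 <= d)%nat -> (gamma <= N)%nat ->
  c gamma d = Cone -> (forall i, (gamma < i)%nat -> c i d = Czero) ->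
  (d < delta)%nat ->
  alpha delta N d c = INR gamma / INR (delta - d) ->
  ~ poly_product N d c ->
  (forall z, in_closure V z -> A_p delta a z) ->
  exists G : Cx -> Cx -> R,
    (forall z w, V z -> Un_cv (fun n => Gn delta N d a c (alpha delta N d c) n z w) (G z w)) /\
    (forall eps, eps > 0 -> exists n0 : nat, forall n z w, (n0 <= n)%nat -> V z ->
       Rabs (Gn delta N d a c (alpha delta N d c) n z w - G z w) < eps).
Proof.
  intros Hdl Ha Hd2 HgN Hg Hz Hd Hal _ HV.
  destruct (step_estimate delta N d gamma a c Hdl Ha ltac:(lia) Hd HgN Hg Hz Hal) as [R [Cst [HR1 Hstep]]].
  assert (Hinv : forall z, R <= Cnorm z -> R <= Cnorm (peval delta a z)).
  { intros z Hz'. exact (proj1 (Hstep z Czero Hz')). }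
  assert (HC : 0 <= Cst).
  { assert (Cnorm (R, 0) = R).
    { unfold Cnorm; simpl. replace (R * R + 0 * 0) with (R * R) by ring. apply sqrt_square; lra. }
    destruct (Hstep (R, 0) Czero ltac:(lra)) as [_ Hb]. pose proof (Rabs_pos (logplus (Cnorm (qeval N d c (R, 0) Czero) / Rpower (Cnorm (peval delta a (R, 0))) (alpha delta N d c)) -
       INR d * logplus (Cnorm Czero / Rpower (Cnorm (R, 0)) (alpha delta N d c)))). lra. }
  destruct (uniform_escape delta a R V Hinv HV) as [k Hk].
  set (al := alpha delta N d c) in *.
  assert (Hdr : 2 <= INR d) by (replace 2 with (INR 2) by (simpl; ring); apply le_INR; lia).
  assert (Hgs : forall z w, V z -> forall n, (k <= n)%nat ->
     Rabs (Gn delta N d a c al (S n) z w - Gn delta N d a c al n z w) <= Cst * / 2 ^ S n).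
  { intros z w HzV n Hn. unfold Gn. cbv zeta.
    change (fiter delta N d a c (S n) (z, w)) with (fmap delta N d a c (fiter delta N d a c n (z, w))).
    assert (Hzn : R <= Cnorm (fst (fiter delta N d a c n (z, w)))).
    { rewrite fiter_fst. apply Hk; auto. }
    destruct (fiter delta N d a c n (z, w)) as [zn wn] eqn:Ezw. simpl in Hzn. unfold fmap. cbn [fst snd].
    destruct (Hstep zn wn Hzn) as [_ Hb]. fold al in Hb.
    set (L1 := logplus (Cnorm (qeval N d c zn wn) / Rpower (Cnorm (peval delta a zn)) al)) in *.
    set (L0 := logplus (Cnorm wn / Rpower (Cnorm zn) al)) in *.
    assert (Hdn : 0 < INR d ^ n) by (apply pow_lt; lra).
    replace (/ INR d ^ S n * L1 - / INR d ^ n * L0) with (/ INR d ^ S n * (L1 - INR d * L0))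
      by (simpl; field; split; lra).
    rewrite Rabs_mult, Rabs_right.
    2:{ left. apply Rinv_0_lt_compat. apply pow_lt; lra. }
    assert (/ INR d ^ S n <= / 2 ^ S n).
    { apply Rinv_le_contravar. apply pow_lt; lra. apply pow_mono_base; lra. }
    assert (0 < / INR d ^ S n) by (apply Rinv_0_lt_compat; apply pow_lt; lra).
    pose proof (Rabs_pos (L1 - INR d * L0)).
    apply Rle_trans with (/ INR d ^ S n * Cst). apply Rmult_le_compat_l; lra.
    rewrite Rmult_comm. apply Rmult_le_compat_l; lra. }
  assert (Htail : forall z w, V z -> forall n j, (k <= n)%nat ->
     Rabs (Gn delta N d a c al (n + j) z w - Gn delta N d a c al n z w) <= Cst * / 2 ^ n).
  { intros z w HzV n j Hn.
    pose proof (tail_bound (fun m => Gn delta N d a c al m z w) Cst k HC (Hgs z w HzV) n j Hn).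
    simpl in H. assert (0 <= Cst * / 2 ^ (n + j)).
    { apply Rmult_le_pos; auto. left; apply Rinv_0_lt_compat; apply pow_lt; lra. }
    lra. }
  assert (Hex : forall z w, exists l, V z -> Un_cv (fun n => Gn delta N d a c al n z w) l).
  { intros z w. destruct (classic (V z)) as [HzV|HzV]; [|exists 0; tauto].
    assert (Hcc : Cauchy_crit (fun n => Gn delta N d a c al n z w)).
    { intros eps Heps. destruct (geom_small Cst HC eps Heps) as [N0 HN0].
      exists (Nat.max N0 k). intros n m Hn Hm. unfold Rdist.
      destruct (Nat.le_ge_cases n m).
      - replace m with (n + (m - n))%nat by lia.
        rewrite Rabs_minus_sym.
        eapply Rle_lt_trans. apply Htail; auto; lia. apply HN0; lia.
      - replace n with (m + (n - m))%nat by lia.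
        eapply Rle_lt_trans. apply Htail; auto; lia. apply HN0; lia. }
    destruct (R_complete _ Hcc) as [l Hl]. exists l. auto. }
  set (Gf := fun z w => proj1_sig (constructive_indefinite_description _ (Hex z w))).
  assert (HGf : forall z w, V z -> Un_cv (fun n => Gn delta N d a c al n z w) (Gf z w)).
  { intros z w HzV. unfold Gf. apply (proj2_sig (constructive_indefinite_description _ (Hex z w))). auto. }
  exists Gf. split. exact HGf.
  intros eps Heps.
  destruct (geom_small Cst HC (eps / 2) ltac:(lra)) as [N0 HN0].
  exists (Nat.max N0 k). intros n z w Hn HzV.
  destruct (HGf z w HzV (eps / 2) ltac:(lra)) as [M HM].
  specialize (HM (n + M)%nat ltac:(lia)). unfold Rdist in HM.
  specialize (Htail z w HzV n M ltac:(lia)). specialize (HN0 n ltac:(lia)).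
  replace (Gn delta N d a c al n z w - Gf z w) with
    ((Gn delta N d a c al (n + M) z w - Gf z w) - (Gn delta N d a c al (n + M) z w - Gn delta N d a c al n z w)) by ring.
  eapply Rle_lt_trans. apply Rabs_triang. rewrite Rabs_Ropp. lra.
Qed.
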